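(* The attention-weighted rank fairness metric $AWRF$ does not satisfy deepness; that is, there exist a population $\mathcal D$, a candidate set $D\subseteq\mathcal D$, a ranking $r$ of $D$ and positions $i<j$ with $y(r(i))=y(r(j))$, $y(r(i+1))=y(r(j+1))$, and either ($r(i),r(j)\in G_0$ and $r(i+1),r(j+1)\in G_1$) or ($r(i),r(j)\in G_1$ and $r(i+1),r(j+1)\in G_0$), such that $|AWRF(r)-AWRF(r_{i\leftrightarrow i+1})|\le|AWRF(r)-AWRF(r_{j\leftrightarrow j+1})|$.
   Context: A population is a finite set $\mathcal{D}$ of candidates partitioned into two nonempty groups, a non-protected group $G_0$ and a protected group $G_1$; each candidate $d$ has a relevance score $y(d)\in\mathbb R$. Let $p_G=|G|/|\mathcal D|$ and $p_{\mathrm{groups}}=(p_{G_0},p_{G_1})$. For a candidate set $D\subseteq\mathcal D$ with $n=|D|$, a ranking is a bijection $r:\{1,\dots,n\}\to D$ and $r^{-1}(d)$ is the position of $d$; $r_{i\leftrightarrow j}$ is $r$ with the candidates at positions $i,j$ swapped. Position bias $b(k)=1/\log_2(k+1)$. $AWRF$: let $p_{\mathrm{Exp}}(r)=\frac{1}{\sum_{k=1}^n b(k)}\left(\sum_{d\in G_0\cap D} b(r^{-1}(d)),\ \sum_{d\in G_1\cap D} b(r^{-1}(d))\right)$, $p_{\mathrm{sum}}(r)=\frac12(p_{\mathrm{Exp}}(r)+p_{\mathrm{groups}})$, $\Delta_{KL}(p\|q)=\sum_i p_i\log_2(p_i/q_i)$ (with $0\log 0=0$), and $AWRF(r)=1-\left[\frac12\Delta_{KL}(p_{\mathrm{Exp}}(r)\|p_{\mathrm{sum}}(r))+\frac12\Delta_{KL}(p_{\mathrm{groups}}\|p_{\mathrm{sum}}(r))\right]$.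 *)

(* Defs.v *)
From HB Require Import structures.
From mathcomp Require Import all_boot all_order all_algebra.
From mathcomp Require Import perm Rstruct.
From Stdlib Require Rdefinitions Rpower.
Set Implicit Arguments. Unset Strict Implicit. Unset Printing Implicit Defensive.
Import Order.TTheory GRing.Theory Num.Theory.
Local Open Scope ring_scope.

Notation R := Rdefinitions.R.

Definition log2 (x : R) : R := Rpower.ln x / Rpower.ln 2.

(* position bias b(k) = 1/log2(k+1), k = 1-indexed position *)
Definition bias (k : nat) : R := 1 / log2 (k.+1)%:R.

(* A population is a finType T with a group labelling g : T -> bool
   (g d = false : d in G0 (non-protected), g d = true : d in G1 (protected)).
   Position k (0-indexed, k : 'I_n) corresponds to the paper's position k+1. *)
Definition is_ranking (T : finType) (D : {set T}) (r : 'I_#|D| -> T) : Prop :=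
  injective r /\ (forall k, r k \in D).

(* two-point distributions as pairs (mass on G0, mass on G1) *)
Definition p_groups (T : finType) (g : T -> bool) : R * R :=
  (#|[set x | ~~ g x]|%:R / #|T|%:R, #|[set x | g x]|%:R / #|T|%:R).

Definition p_Exp (T : finType) (g : T -> bool) (n : nat) (r : 'I_n -> T) : R * R :=
  let Z := \sum_(k < n) bias k.+1 in
  ((\sum_(k < n | ~~ g (r k)) bias k.+1) / Z,
   (\sum_(k < n | g (r k)) bias k.+1) / Z).

Definition p_sum (T : finType) (g : T -> bool) (n : nat) (r : 'I_n -> T) : R * R :=
  (((p_Exp g r).1 + (p_groups g).1) / 2, ((p_Exp g r).2 + (p_groups g).2) / 2).

(* summand p log2 (p/q), with the convention 0 log 0 = 0 *)
Definition kl_term (p q : R) : R := if p == 0 then 0 else p * log2 (p / q).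

Definition KL (p q : R * R) : R := kl_term p.1 q.1 + kl_term p.2 q.2.

Definition AWRF (T : finType) (g : T -> bool) (n : nat) (r : 'I_n -> T) : R :=
  1 - (KL (p_Exp g r) (p_sum g r) / 2 + KL (p_groups g) (p_sum g r) / 2).

Definition swap (T : Type) (n : nat) (r : 'I_n -> T) (i j : 'I_n) : 'I_n -> T :=
  fun k => r (tperm i j k).

(* Main.v *)
Require Import Defs.
From HB Require Import structures.
From mathcomp Require Import all_boot all_order all_algebra perm.
From mathcomp Require Import Rstruct.
Import Order.TTheory GRing.Theory Num.Theory.
Local Open Scope ring_scope.

Definition gg (x : 'I_4) : bool := odd x.

Lemma gg_rev x : gg (rev_ord x) = ~~ gg x.
Proof. by case: x => [[|[|[|[|]]]] ?]. Qed.

Lemma cc : #|[set x : 'I_4 | ~~ gg x]| = #|[set x : 'I_4 | gg x]|.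
Proof.
rewrite -(card_imset _ (@rev_ord_inj 4)); apply: eq_card => x.
rewrite inE; apply/imsetP/idP.
  by case=> y; rewrite inE => hy ->; rewrite gg_rev.
move=> hx; exists (rev_ord x); last by rewrite rev_ordK.
by rewrite inE gg_rev hx.
Qed.

Lemma pg : (p_groups gg).1 = (p_groups gg).2.
Proof. by rewrite /p_groups /= cc. Qed.

Lemma key (m : nat) (hm : m = 4%N) (r : 'I_m -> 'I_4) (hr : forall k, val (r k) = val k)
  (i i1 j j1 : 'I_m) (hi : val i = 0%N) (hi1 : val i1 = 1%N) (hj : val j = 2%N) (hj1 : val j1 = 3%N) :
  AWRF gg (swap r i i1) = AWRF gg (swap r j j1).
Proof.
subst m.
have E : forall k, gg (r k) = odd k by move=> k; rewrite /gg hr.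
have -> : i = Ordinal (isT : (0 < 4)%N) by apply: val_inj.
have -> : i1 = Ordinal (isT : (1 < 4)%N) by apply: val_inj.
have -> : j = Ordinal (isT : (2 < 4)%N) by apply: val_inj.
have -> : j1 = Ordinal (isT : (3 < 4)%N) by apply: val_inj.
have H1 : (p_Exp gg (swap r (Ordinal (isT : (0 < 4)%N)) (Ordinal (isT : (1 < 4)%N)))).1
        = (p_Exp gg (swap r (Ordinal (isT : (2 < 4)%N)) (Ordinal (isT : (3 < 4)%N)))).2.
  rewrite /p_Exp /swap /= !(big_mkcond (fun k => ~~ gg _)) !(big_mkcond (fun k => gg _)) /=.
  by rewrite !big_ord_recl !big_ord0 !permE /= !E /=.
have H2 : (p_Exp gg (swap r (Ordinal (isT : (0 < 4)%N)) (Ordinal (isT : (1 < 4)%N)))).2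
        = (p_Exp gg (swap r (Ordinal (isT : (2 < 4)%N)) (Ordinal (isT : (3 < 4)%N)))).1.
  rewrite /p_Exp /swap /= !(big_mkcond (fun k => ~~ gg _)) !(big_mkcond (fun k => gg _)) /=.
  by rewrite !big_ord_recl !big_ord0 !permE /= !E /=.
rewrite /AWRF /KL /p_sum.
move: H1 H2; set a := p_Exp _ _; set b := p_Exp _ _; set c := p_groups _.
move: pg; rewrite -/c => pg H1 H2.
case: a H1 H2 => a1 a2; case: b => b1 b2; case: c pg => c1 c2 /= -> -> ->.
congr (1 - (_ / 2 + _ / 2)); exact: addrC.
Qed.

Theorem theorem9 :
  exists (T : finType) (g : T -> bool) (y : T -> R) (D : {set T})
         (r : 'I_#|D| -> T) (i i1 j j1 : 'I_#|D|),
    (exists x, ~~ g x) /\ (exists x, g x) /\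
    is_ranking r /\
    (i < j)%N /\ val i1 = (val i).+1 /\ val j1 = (val j).+1 /\
    y (r i) = y (r j) /\ y (r i1) = y (r j1) /\
    ((~~ g (r i) /\ ~~ g (r j) /\ g (r i1) /\ g (r j1)) \/
     (g (r i) /\ g (r j) /\ ~~ g (r i1) /\ ~~ g (r j1))) /\
    `|AWRF g r - AWRF g (swap r i i1)| <= `|AWRF g r - AWRF g (swap r j j1)|.
Proof.
have hD : #|[set: 'I_4]| = 4%N by rewrite cardsT card_ord.
pose D := [set: 'I_4].
have hlt : forall k, (k < 4)%N -> (k < #|D|)%N by move=> k; rewrite hD.
pose r := fun k : 'I_#|D| => (inord k : 'I_4).
have hr : forall k, val (r k) = val k.
  by move=> k; rewrite /r /= inordK //; have := ltn_ord k; rewrite {2}hD.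
exists ('I_4 : finType), gg, (fun _ => 0), D, r,
  (Ordinal (hlt 0%N isT)), (Ordinal (hlt 1%N isT)),
  (Ordinal (hlt 2%N isT)), (Ordinal (hlt 3%N isT)).
split; first by exists ord0.
split; first by exists (Ordinal (isT : (1 < 4)%N)).
split.
  split; last by move=> k; rewrite inE.
  by move=> a b hab; apply: val_inj; rewrite -hr hab hr.
do 5 (split; first by []).
split; first by left; rewrite /gg !hr.
by rewrite (@key _ hD r hr (Ordinal (hlt 0%N isT)) (Ordinal (hlt 1%N isT)) (Ordinal (hlt 2%N isT)) (Ordinal (hlt 3%N isT))).
Qed.
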